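(* Let $F$ be a field of characteristic $2$, let $\phi$ be an anisotropic quasilinear quadratic form over $F$, let $K$ be a purely transcendental field extension of $F$, and let $r$ be a positive integer. If $\phi_K$ is divisible by an $r$-fold quasi-Pfister form over $K$, then $\phi$ is divisible by an $r$-fold quasi-Pfister form over $F$.
   Context: A quasilinear quadratic form over a field of characteristic 2 is a quadratic form $\phi$ on a finite-dimensional space with $\phi(v+w)=\phi(v)+\phi(w)$. The $r$-fold quasi-Pfister form $\langle\langle a_1,\dots,a_r\rangle\rangle$ is $\sum_{S\subseteq\{1,\dots,r\}}(\prod_{j\in S}a_j)x_S^2$. $\phi$ is divisible by $\pi$ if $\phi\simeq\pi\otimes\sigma$ for some quasilinear quadratic form $\sigma$. *)

(* Defs.v *)
From HB Require Import structures.
From mathcomp Require Import all_boot all_order all_algebra.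
From mathcomp Require Import mpoly.
Set Implicit Arguments. Unset Strict Implicit. Unset Printing Implicit Defensive.
Import GRing.Theory.
Local Open Scope ring_scope.

(* A quasilinear quadratic form in char 2 is diagonal in any basis:
   phi(sum x_i e_i) = sum x_i^2 phi(e_i).  We represent the form
   <a_1,...,a_n> by the sequence of its coefficients. *)

Definition qf {R : pzRingType} (a : seq R) {n : nat} (x : 'rV[R]_n) : R :=
  \sum_(i < n) a`_i * (x 0 i) ^+ 2.

Definition qf_iso {F : fieldType} (a b : seq F) : Prop :=
  size a = size b /\
  exists2 A : 'M[F]_(size a), A \in unitmx &
    forall x : 'rV[F]_(size a), qf b (x *m A) = qf a x.

Definition anisotropic {F : fieldType} (a : seq F) : Prop :=
  forall x : 'rV[F]_(size a), qf a x = 0 -> x = 0.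

Definition qf_tensor {R : pzRingType} (a b : seq R) : seq R :=
  [seq x * y | x <- a, y <- b].

Definition quasi_pfister {R : comPzRingType} (r : nat) (a : 'I_r -> R) : seq R :=
  [seq \prod_(j in J) a j | J : {set 'I_r}].

Definition qf_divisible {F : fieldType} (phi pi : seq F) : Prop :=
  exists sigma : seq F, qf_iso phi (qf_tensor pi sigma).

Definition divisible_by_rfold_qpfister {F : fieldType} (phi : seq F) (r : nat)
  : Prop := exists a : 'I_r -> F, qf_divisible phi (quasi_pfister a).

(* K / iota(F) is purely transcendental: K is generated as a field over
   iota(F) by an algebraically independent family (t_i)_{i in I}. *)
Definition purely_transcendental {F K : fieldType} (iota : {rmorphism F -> K})
  : Prop :=
  exists (I : Type) (t : I -> K),
    (forall (n : nat) (f : 'I_n -> I), injective f ->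
       forall p : {mpoly F[n]}, p != 0 ->
         (map_mpoly iota p).@[fun i => t (f i)] != 0)
    /\
    (forall P : K -> Prop,
       (forall c, P (iota c)) -> (forall i, P (t i)) ->
       (forall x y, P x -> P y -> P (x - y)) ->
       (forall x y, P x -> P y -> P (x * y)) ->
       (forall x, P x -> P x^-1) ->
       forall x, P x).

(* Main.v *)
Require Import Defs.
From HB Require Import structures.
From mathcomp Require Import all_boot all_order all_algebra.
From mathcomp Require Import mpoly.
From Stdlib Require Import Classical.
From mathcomp Require Import ring.
Set Implicit Arguments. Unset Strict Implicit. Unset Printing Implicit Defensive.
Import GRing.Theory.
Local Open Scope ring_scope.

Definition span {R : pzRingType} (a : seq R) (c : R) : Prop :=
  exists x : 'rV[R]_(size a), qf a x = c.

Lemma ker_nz (R : fieldType) m n (M : 'M[R]_(m,n)) :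
  ~~ row_free M -> exists2 v : 'rV_m, v != 0 & v *m M = 0.
Proof. by rewrite -kermx_eq0 => /rowV0Pn [v /sub_kermxP vM nz]; exists v. Qed.

Definition Nmx (R : fieldType) n m (Zs : 'I_n -> 'M[R]_(n, n + m)) : 'M[R]_(n, n * m) :=
  \matrix_(k, j) (mxvec (\matrix_(i, l) (rsubmx (Zs i) k l)) 0 j).

Lemma NmxE (R : fieldType) n m (Zs : 'I_n -> 'M[R]_(n, n + m)) (y : 'rV_n) i l :
  (y *m Nmx Zs) 0 (mxvec_index i l) = rsubmx (y *m Zs i) 0 l.
Proof.
rewrite -mulmx_rsub !mxE; apply: eq_bigr => k _; by rewrite !mxE mxvecE !mxE.
Qed.

Lemma Nmx0 (R : fieldType) n m (Zs : 'I_n -> 'M[R]_(n, n + m)) (y : 'rV_n) :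
  y *m Nmx Zs = 0 <-> forall i, rsubmx (y *m Zs i) = 0.
Proof.
split.
  move=> h i; apply/rowP => l; by rewrite -NmxE h !mxE.
move=> h; apply/rowP => j; case/mxvec_indexP: j => i l.
by rewrite NmxE h !mxE.
Qed.

Lemma map_Nmx (R S : fieldType) (f : {rmorphism R -> S}) n m
  (Zs : 'I_n -> 'M[R]_(n, n + m)) :
  map_mx f (Nmx Zs) = Nmx (fun i => map_mx f (Zs i)).
Proof.
apply/matrixP => k j; case/mxvec_indexP: j => i l.
by rewrite !mxE !mxvecE !mxE.
Qed.

Section Basics.
Variables (R : fieldType) (ch : 2%N \in [pchar R]).

Lemma sqrD (x y : R) : (x + y) ^+ 2 = x ^+ 2 + y ^+ 2.
Proof. by rewrite sqrrD -mulr_natr (pcharf0 ch) mulr0 addr0. Qed.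

Lemma sqr_sum (I : Type) (r : seq I) (P : pred I) (f : I -> R) :
  (\sum_(i <- r | P i) f i) ^+ 2 = \sum_(i <- r | P i) f i ^+ 2.
Proof. by apply: (big_morph (fun x => x ^+ 2)) => [x y|]; rewrite ?sqrD ?expr0n. Qed.

Lemma qf0 (a : seq R) n : qf a (0 : 'rV_n) = 0.
Proof. by rewrite /qf big1 // => i _; rewrite mxE expr0n mulr0. Qed.

Lemma qfD (a : seq R) n (x y : 'rV_n) : qf a (x + y) = qf a x + qf a y.
Proof. by rewrite /qf -big_split; apply: eq_bigr => i _; rewrite mxE sqrD mulrDr. Qed.

Lemma qfZ (a : seq R) n c (x : 'rV_n) : qf a (c *: x) = c ^+ 2 * qf a x.
Proof.
rewrite /qf mulr_sumr; apply: eq_bigr => i _.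
by rewrite mxE exprMn mulrCA.
Qed.

Lemma qf_mul (a b : seq R) m n (Z : 'M_(m, n)) (x : 'rV_m) :
  (forall j : 'I_m, b`_j = qf a (row j Z)) -> qf a (x *m Z) = qf b x.
Proof.
move=> hb; rewrite /qf.
under eq_bigr => i _ do rewrite mxE sqr_sum mulr_sumr.
rewrite exchange_big /=; apply: eq_bigr => j _.
rewrite hb /qf mulr_suml; apply: eq_bigr => i _.
by rewrite !mxE exprMn mulrCA mulrC.
Qed.

Lemma nth_map_rm (S : fieldType) (f : {rmorphism R -> S}) (a : seq R) i :
  (map f a)`_i = f a`_i.
Proof.
case: (ltnP i (size a)) => h; first by rewrite (nth_map 0).
by rewrite !nth_default ?size_map ?rmorph0.
Qed.

Lemma qf_map (S : fieldType) (f : {rmorphism R -> S}) (a : seq R) n (x : 'rV_n) :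
  qf (map f a) (map_mx f x) = f (qf a x).
Proof.
rewrite /qf rmorph_sum; apply: eq_bigr => i _.
by rewrite nth_map_rm mxE rmorphM rmorphXn.
Qed.

Lemma span0 (a : seq R) : span a 0.
Proof. by exists 0; rewrite qf0. Qed.

Lemma spanD (a : seq R) u v : span a u -> span a v -> span a (u + v).
Proof. by move=> [x <-] [y <-]; exists (x + y); rewrite qfD. Qed.

Lemma spanZ (a : seq R) c u : span a u -> span a (c ^+ 2 * u).
Proof. by move=> [x <-]; exists (c *: x); rewrite qfZ. Qed.

Lemma span_sum (a : seq R) (I : Type) (r : seq I) (P : pred I) (f : I -> R) :
  (forall i, P i -> span a (f i)) -> span a (\sum_(i <- r | P i) f i).
Proof.
move=> h; apply: (big_ind (span a)); [exact: span0| exact: spanD| exact: h].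
Qed.

Definition delta n (i : 'I_n) : 'rV[R]_n := \row_j ((j == i)%:R).

Lemma qf_delta (a : seq R) n (i : 'I_n) : qf a (delta i) = a`_i.
Proof.
rewrite /qf (bigD1 i) //= big1 => [|j /negbTE ji].
  by rewrite mxE eqxx expr1n mulr1 addr0.
by rewrite mxE ji expr0n mulr0.
Qed.

Lemma delta_nz n (i : 'I_n) : delta i != 0.
Proof. by apply/eqP => /rowP /(_ i); rewrite !mxE eqxx; apply/eqP; exact: oner_neq0. Qed.

Lemma span_nth (a : seq R) (i : 'I_(size a)) : span a a`_i.
Proof. by exists (delta i); rewrite qf_delta. Qed.

Lemma span_mem (a : seq R) x : x \in a -> span a x.
Proof.
move=> xa; have hi : (index x a < size a)%N by rewrite index_mem.
have := span_nth (Ordinal hi).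
by rewrite /= nth_index.
Qed.

Lemma span_mulr (a b : seq R) c u :
  (forall x, x \in a -> span b (c * x)) -> span a u -> span b (c * u).
Proof.
move=> h [x <-]; rewrite /qf mulr_sumr; apply: span_sum => i _.
rewrite mulrA mulrC; apply: spanZ; apply: h; exact: mem_nth.
Qed.

Lemma span_trans (a b : seq R) u :
  (forall x, x \in a -> span b x) -> span a u -> span b u.
Proof.
move=> h su; rewrite -[u]mul1r; apply: span_mulr su => x xa; rewrite mul1r; exact: h.
Qed.

Definition aniso_n n (a : seq R) := forall x : 'rV_n, qf a x = 0 -> x = 0.

Lemma anisoE n (a : seq R) : n = size a -> anisotropic a -> aniso_n n a.
Proof. by move=> ->. Qed.

Lemma anisoI n (a : seq R) : n = size a -> aniso_n n a -> anisotropic a.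
Proof. by move=> ->. Qed.

Lemma aniso_nz (a : seq R) x : anisotropic a -> x \in a -> x != 0.
Proof.
move=> an xa; have hi : (index x a < size a)%N by rewrite index_mem.
apply/eqP => x0; have := an (delta (Ordinal hi)); rewrite qf_delta /=.
have -> : a`_(index x a) = 0 by rewrite nth_index.
by move=> /(_ erefl) /eqP; rewrite (negbTE (delta_nz _)).
Qed.

Lemma coord_mx (a : seq R) m N (f : 'I_m -> R) : N = size a ->
  (forall j, span a (f j)) -> exists Z : 'M_(m, N), forall j, qf a (row j Z) = f j.
Proof.
move=> -> h; have /fin_all_exists [g hg] := h.
exists (\matrix_(j, i) g j 0 i) => j; rewrite -hg; congr qf.
by apply/rowP => i; rewrite !mxE.
Qed.

Lemma size_le (a b : seq R) : anisotropic b ->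
  (forall x, x \in b -> span a x) -> (size b <= size a)%N.
Proof.
move=> an h; have [Z hZ] := @coord_mx a (size b) (size a) (fun j => b`_j) erefl
  (fun j => h _ (mem_nth 0 (ltn_ord j))).
rewrite leqNgt; apply/negP => lt.
have : ~~ row_free Z.
  by rewrite /row_free neq_ltn (leq_ltn_trans (rank_leq_col Z) lt).
move=> /ker_nz [v vnz vZ]; move: vnz; rewrite (an v) ?eqxx //.
by rewrite -(@qf_mul a b _ _ Z) ?vZ ?qf0 // => j; rewrite hZ.
Qed.

Lemma iso_of_span (a b : seq R) : anisotropic a -> anisotropic b ->
  (forall x, x \in a -> span b x) -> (forall x, x \in b -> span a x) ->
  qf_iso a b.
Proof.
move=> ana anb hab hba.
have eab : size a = size b by apply/eqP; rewrite eqn_leq !size_le.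
split => //.
have [Z hZ] := @coord_mx b (size a) (size a) (fun j => a`_j) eab
  (fun j => hab _ (mem_nth 0 (ltn_ord j))).
have qZ x : qf b (x *m Z) = qf a x by apply: qf_mul => j; rewrite hZ.
exists Z => //; rewrite -row_free_unit; apply/negPn/negP => /ker_nz [v vnz vZ].
by move: vnz; rewrite (ana v) ?eqxx // -qZ vZ qf0.
Qed.

Lemma aniso_span (p q : seq R) : size p = size q -> anisotropic q ->
  (forall x, x \in q -> span p x) -> anisotropic p.
Proof.
move=> e anq h.
have [Z hZ] := @coord_mx p (size p) (size p) (fun j => q`_j) erefl
  (fun j => h _ (mem_nth 0 (leq_trans (ltn_ord j) (eq_leq e)))).
have qZ x : qf p (x *m Z) = qf q x by apply: qf_mul => j; rewrite hZ.
have anq' := @anisoE (size p) q e anq.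
have uZ : row_free Z.
  apply/negPn/negP => /ker_nz [v vnz vZ].
  by move: vnz; rewrite (anq' v) ?eqxx // -qZ vZ qf0.
move=> x qx; have uZ' : Z \in unitmx by rewrite -row_free_unit.
have := anq' (x *m invmx Z); rewrite -qZ mulmxKV // => /(_ qx) h0.
by rewrite -(mulmxKV uZ' x) h0 mul0mx.
Qed.

Lemma spanE N (a : seq R) c : N = size a ->
  span a c <-> exists z : 'rV_N, qf a z = c.
Proof. by move=> ->. Qed.

Lemma qf_cat (L M : seq R) (z : 'rV_(size L + size M)) :
  qf (L ++ M) z = qf L (lsubmx z) + qf M (rsubmx z).
Proof.
rewrite /qf big_split_ord /=; congr (_ + _); apply: eq_bigr => i _;
  rewrite nth_cat ?mxE /=.
  by rewrite ltn_ord.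
by rewrite ltnNge leq_addr /= addKn.
Qed.

Lemma nth_map0 (f : R -> R) (s : seq R) i : f 0 = 0 -> (map f s)`_i = f s`_i.
Proof.
move=> f0; case: (ltnP i (size s)) => h; first by rewrite (nth_map 0).
by rewrite !nth_default ?size_map.
Qed.

Lemma qf_mapl x (M : seq R) n (z : 'rV_n) :
  qf (map (fun p => x * p) M) z = x * qf M z.
Proof.
rewrite /qf mulr_sumr; apply: eq_bigr => i _.
rewrite (@nth_map0 (fun p => x * p)) ?mulr0 //.
symmetry; exact: mulrA.
Qed.

Lemma span_cat_map (L M : seq R) x c :
  span (L ++ map (fun p => x * p) M) c <->
  exists u v, [/\ span L u, span M v & c = u + x * v].
Proof.
set M' := map _ M.
have eM : size M' = size M by rewrite size_map.
rewrite (@spanE (size L + size M')) ?size_cat //; split.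
  move=> [z <-]; exists (qf L (lsubmx z)), (qf M (rsubmx z)).
  rewrite qf_cat qf_mapl; split => //; first by exists (lsubmx z).
  by apply/(@spanE (size M')) => //; exists (rsubmx z).
move=> [u [v [[z1 <-] sv ->]]]; move/(@spanE (size M')): sv => /(_ eM) [z2 <-].
by exists (row_mx z1 z2); rewrite qf_cat qf_mapl row_mxKl row_mxKr.
Qed.

Lemma aniso_step (P L : seq R) x : anisotropic P -> anisotropic L ->
  (forall p l, span P p -> span L l -> span L (p * l)) -> ~ span L x ->
  anisotropic (L ++ map (fun p => x * p) P).
Proof.
move=> anP anL hPL nx.
set P' := map _ P.
have eP : size P' = size P by rewrite size_map.
have anP' := anisoE eP anP.
apply: (@anisoI (size L + size P')); first by rewrite size_cat.
move=> z; rewrite qf_cat qf_mapl => h.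
have e0 : qf P (rsubmx z) = 0.
  apply/eqP/negPn/negP => nz; apply: nx.
  have hxe : x * qf P (rsubmx z) = qf L (lsubmx z).
    by move/eqP: h; rewrite addr_eq0 => /eqP ->; rewrite (oppr_pchar2 ch).
  have -> : x = (qf P (rsubmx z))^-1 * qf L (lsubmx z).
    by rewrite -hxe [x * _]mulrC mulKf.
  apply: hPL; last by exists (lsubmx z).
  rewrite -[_^-1](@mulfVK _ (qf P (rsubmx z))) // -expr2.
  by apply: spanZ; apply/(@spanE (size P')) => //; exists (rsubmx z).
have z2 : rsubmx z = 0 by apply: anP'.
have z1 : lsubmx z = 0 by apply: anL; move: h; rewrite e0 mulr0 addr0.
by rewrite -(hsubmxK z) z1 z2 row_mx0.
Qed.

Fixpoint pf (s : seq R) : seq R :=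
  if s is x :: s' then pf s' ++ map (fun p => x * p) (pf s') else [:: 1].

Lemma size_pf s : size (pf s) = (2 ^ size s)%N.
Proof. by elim: s => //= x s IH; rewrite size_cat size_map IH expnS mul2n addnn. Qed.

Lemma pf1 s : span (pf s) 1.
Proof.
elim: s => [|x s IH] /=; first by apply: span_mem; rewrite mem_seq1.
by apply/span_cat_map; exists 1, 0; split => //; [exact: span0 | rewrite mulr0 addr0].
Qed.

Lemma pf_mul s p q : span (pf s) p -> span (pf s) q -> span (pf s) (p * q).
Proof.
elim: s p q => [|x s IH] p q /=.
  move=> [z <-] [w <-]; rewrite /qf !big_ord1 /=.
  exists (\row_i (z 0 0 * w 0 0)); rewrite /qf big_ord1 /= mxE.
  by rewrite !mul1r exprMn.
move=> /span_cat_map [u [v [su sv ->]]] /span_cat_map [u' [v' [su' sv' ->]]].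
apply/span_cat_map; exists (u * u' + x ^+ 2 * (v * v')), (u * v' + v * u').
split; [by apply: spanD; [exact: IH | apply: spanZ; exact: IH]|
        by apply: spanD; exact: IH|].
by rewrite expr2; ring.
Qed.

Lemma pf_aniso s x : anisotropic (pf s) -> ~ span (pf s) x ->
  anisotropic (pf (x :: s)).
Proof. by move=> an nx; apply: aniso_step => // p l; exact: pf_mul. Qed.

Lemma pf_sub (W : R -> Prop) s : W 1 ->
  (forall c y, W c -> y \in s -> W (y * c)) -> forall c, c \in pf s -> W c.
Proof.
elim: s => [|x s IH] W1 hW c /=; first by rewrite mem_seq1 => /eqP ->.
have IH' : forall c, c \in pf s -> W c.
  by apply: IH => // c' y Wc ys; apply: hW => //; rewrite in_cons ys orbT.
rewrite mem_cat => /orP [|/mapP [p pP ->]]; first exact: IH'.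
by apply: hW; [exact: IH' | exact: mem_head].
Qed.

Lemma size_qp r (a : 'I_r -> R) : size (quasi_pfister a) = (2 ^ r)%N.
Proof.
rewrite /quasi_pfister size_image.
by rewrite -cardsT -powersetT card_powerset cardsT card_ord.
Qed.

Lemma qp_mem r (a : 'I_r -> R) (J : {set 'I_r}) :
  \prod_(j in J) a j \in quasi_pfister a.
Proof. by rewrite /quasi_pfister; apply: map_f; rewrite mem_enum. Qed.

Lemma qp_memP r (a : 'I_r -> R) z :
  z \in quasi_pfister a -> exists J : {set 'I_r}, z = \prod_(j in J) a j.
Proof. by move=> /imageP [J _ ->]; exists J. Qed.

Lemma qp_mul r (a : 'I_r -> R) j (J : {set 'I_r}) :
  exists c (J' : {set 'I_r}), a j * \prod_(i in J) a i = c ^+ 2 * \prod_(i in J') a i.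
Proof.
case: (boolP (j \in J)) => jJ.
  by exists (a j), (J :\ j); rewrite (big_setD1 _ jJ) /= mulrA expr2.
by exists 1, (j |: J); rewrite (big_setU1 _ jJ) /= expr1n mul1r.
Qed.

Lemma span_qp_mul r (a : 'I_r -> R) j u :
  span (quasi_pfister a) u -> span (quasi_pfister a) (a j * u).
Proof.
apply: span_mulr => x /qp_memP [J ->].
have [c [J' ->]] := qp_mul a j J; apply: spanZ; apply: span_mem; exact: qp_mem.
Qed.

Definition Sx (phi : seq R) c := forall y, y \in phi -> span phi (c * y).

Lemma Sx1 phi : Sx phi 1.
Proof. by move=> y yp; rewrite mul1r; exact: span_mem. Qed.

Lemma Sx_span phi (p : seq R) u :
  (forall c, c \in p -> Sx phi c) -> span p u -> Sx phi u.
Proof.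
move=> h [x <-] y yp; rewrite /qf mulr_suml; apply: span_sum => i _.
rewrite mulrAC mulrC; apply: spanZ; apply: h => //; exact: mem_nth.
Qed.

Lemma Sx_mul phi c d : Sx phi c -> Sx phi d -> Sx phi (c * d).
Proof. by move=> hc hd y yp; rewrite -mulrA; apply: span_mulr (hd y yp) => x xp; exact: hc. Qed.

Lemma span_nil u : span ([::] : seq R) u -> u = 0.
Proof. by move=> [x <-]; rewrite /qf big_ord0. Qed.

Lemma aniso_nil : anisotropic ([::] : seq R).
Proof. by move=> x _; apply/rowP => -[]. Qed.

Lemma aniso_pf0 : anisotropic (pf [::]).
Proof.
move=> x; rewrite /qf big_ord1 /= mul1r => /eqP; rewrite expf_eq0 /= => /eqP x0.
by apply/rowP => i; rewrite ord1 x0 mxE.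
Qed.

Lemma span_pf_mem s y : y \in s -> span (pf s) y.
Proof.
elim: s => [|x s IH] //= ys; apply/span_cat_map.
move: ys; rewrite in_cons => /orP [/eqP ->|ys].
  by exists 0, 1; split; [exact: span0 | exact: pf1 | rewrite add0r mulr1].
by exists y, 0; split; [exact: IH | exact: span0 | rewrite mulr0 addr0].
Qed.

Lemma C1 phi (e : seq R) r : anisotropic e -> (2 ^ r <= size e)%N ->
  (forall c, c \in e -> Sx phi c) ->
  exists s, [/\ size s = r, anisotropic (pf s) & forall c, c \in pf s -> Sx phi c].
Proof.
move=> ane le he.
suff [s [sz an hs]] : exists s, [/\ size s = r, anisotropic (pf s) & forall y, y \in s -> Sx phi y].
  exists s; split => //; apply: pf_sub; first exact: Sx1.
  by move=> c y Wc ys; apply: Sx_mul => //; exact: hs.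
have : (r <= r)%N by [].
elim: {1 3}r => [|k IH] kr; first by exists [::]; split => //; exact: aniso_pf0.
have [s [sz an hs]] := IH (ltnW kr).
case: (classic (exists x, x \in e /\ ~ span (pf s) x)) => [[x [xe nx]]|nex].
  exists (x :: s); split => /=; [by rewrite sz | exact: pf_aniso |].
  by move=> y; rewrite in_cons => /orP [/eqP ->|]; [exact: he | exact: hs].
have : (size e <= size (pf s))%N.
  apply: size_le => // x xe; apply: NNPP => nx; apply: nex; by exists x.
rewrite size_pf sz => le2; have := leq_trans le le2.
by rewrite leq_exp2l // leqNgt kr.
Qed.

Fixpoint tl (E vs : seq R) : seq R :=
  if vs is v :: vs' then tl E vs' ++ map (fun p => v * p) E else [::].

Lemma size_tl E vs : size (tl E vs) = (size vs * size E)%N.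
Proof. by elim: vs => //= v vs IH; rewrite size_cat size_map IH mulSn addnC. Qed.

Lemma mem_tl E vs z : z \in tl E vs <-> exists v p, [/\ v \in vs, p \in E & z = v * p].
Proof.
elim: vs z => [|v vs IH] z /=; first by split => // [[v [p [] ]]].
rewrite mem_cat; split.
  move=> /orP [/(proj1 (IH _)) [v' [p [h1 h2 ->]]]|/mapP [p pE ->]].
    by exists v', p; rewrite in_cons h1 orbT.
  by exists v, p; rewrite mem_head.
move=> [v' [p [h1 h2 ->]]]; move: h1; rewrite in_cons => /orP [/eqP ->|h1].
  by apply/orP; right; apply: map_f.
by apply/orP; left; apply/(proj2 (IH _)); exists v', p.
Qed.

Lemma tl_mul E vs p l :
  (forall p q, span E p -> span E q -> span E (p * q)) ->
  span E p -> span (tl E vs) l -> span (tl E vs) (p * l).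
Proof.
move=> hE pE; elim: vs l => [|v vs IH] l /=; first by move=> /span_nil ->; rewrite mulr0; exact: span0.
move=> /span_cat_map [u [w [su sw ->]]]; apply/span_cat_map.
exists (p * u), (p * w); split; [exact: IH | exact: hE | by rewrite mulrDr mulrCA].
Qed.

Lemma C2 phi (E : seq R) : anisotropic phi -> anisotropic E -> (0 < size E)%N ->
  (forall p q, span E p -> span E q -> span E (p * q)) ->
  (forall c, c \in E -> Sx phi c) ->
  exists vs, [/\ anisotropic (tl E vs), forall z, z \in tl E vs -> span phi z
   & forall y, y \in phi -> span (tl E vs) y].
Proof.
move=> anphi anE szE hE hS.
suff /(_ (size phi).+1) [vs [an sub [le|cov]]] : forall N, exists vs,
  [/\ anisotropic (tl E vs), forall z, z \in tl E vs -> span phi z &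
   (N <= size (tl E vs))%N \/ forall y, y \in phi -> span (tl E vs) y].
- by have := size_le an sub; rewrite leqNgt le.
- by exists vs.
elim => [|N [vs [an sub H]]].
  exists [::]; split => //=; [exact: aniso_nil | by left].
case: (classic (forall y, y \in phi -> span (tl E vs) y)) => [cov|ncov].
  by exists vs; split => //; right.
case: H => [le|]; last by move=> /ncov.
have [y [yp ny]] : exists y, y \in phi /\ ~ span (tl E vs) y.
  apply: NNPP => h; apply: ncov => y yp; apply: NNPP => ny; apply: h; by exists y.
exists (y :: vs); split => /=.
- by apply: aniso_step => // p' l' sp sl; exact: tl_mul.
- move=> z; rewrite mem_cat => /orP [/sub //|/mapP [p pE ->]].
  by rewrite mulrC; apply: hS.
- left; rewrite size_cat size_map (leq_trans _ (leq_add le (leqnn _))) //. by rewrite -addn1 leq_add2l.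
Qed.

Lemma stepC phi (e : seq R) r : anisotropic phi -> anisotropic e ->
  (2 ^ r <= size e)%N -> (forall c, c \in e -> Sx phi c) ->
  divisible_by_rfold_qpfister phi r.
Proof.
move=> anphi ane le he.
have [s [sz anE hS]] := C1 ane le he.
have szE : (0 < size (pf s))%N by rewrite size_pf expn_gt0.
have [vs [an sub cov]] := C2 anphi anE szE (@pf_mul s) hS.
set E := pf s in anE hS szE an sub cov *.
set L := tl E vs in an sub cov *.
exists (fun j : 'I_r => s`_j), vs.
set pi := quasi_pfister _.
set T := qf_tensor pi vs.
have TL : forall z, z \in T -> span L z.
  move=> z /allpairsP [[u v] [/= up vv ->]].
  have su : span E u.
    have [J ->] := qp_memP up.
    apply: (big_ind (span E)); [exact: pf1 | exact: pf_mul |] => j _.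
    by apply: span_pf_mem; apply: mem_nth; rewrite sz.
  rewrite mulrC; apply: span_mulr su => x xE; apply: span_mem.
  by apply/mem_tl; exists v, x.
have LT : forall z, z \in L -> span T z.
  move=> z /mem_tl [v [p [vv pE ->]]].
  have sp : span pi p.
    apply: (pf_sub (W := span pi)) pE.
      have := qp_mem (fun j : 'I_r => s`_j) set0; rewrite big_set0.
      exact: span_mem.
    move=> c y sc ys.
    have hi : (index y s < r)%N by rewrite -sz index_mem.
    have := @span_qp_mul r (fun j : 'I_r => s`_j) (Ordinal hi) _ sc.
    by rewrite /= nth_index.
  apply: span_mulr sp => x xpi; rewrite mulrC; apply: span_mem.
  by apply: allpairs_f.
have anT : anisotropic T.
  apply: (aniso_span _ an LT).
  by rewrite /T /qf_tensor size_allpairs size_qp /L size_tl /E size_pf sz mulnC.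
apply: iso_of_span => // x xp.
  by apply: span_trans (cov x xp) => z zL; exact: LT.
by apply: span_trans (TL x xp) => z zL; exact: sub.
Qed.

Lemma prefix (a c' : seq R) n m (en : n = size a) (em : m = size c')
  (z : 'rV_(n + m)) : anisotropic (a ++ c') ->
  (span a (qf (a ++ c') z) <-> rsubmx z = 0).
Proof.
subst n m => an; have an' := @anisoE (size a + size c') _ (esym (size_cat _ _)) an.
split; last first.
  by move=> hz; exists (lsubmx z); rewrite qf_cat hz qf0 addr0.
move=> [x hx].
have h0 : z + row_mx x 0 = 0.
  apply: an'; rewrite qfD [qf _ (row_mx _ _)]qf_cat row_mxKl row_mxKr qf0 addr0 hx.
  exact: (addrr_pchar2 ch).
apply/rowP => l; have := congr1 (fun w : 'rV__ => w 0 (rshift (size a) l)) h0.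
by rewrite !mxE; case: splitP => [j|j] /=; rewrite ?mxE ?addr0 //; move=> e; exfalso; move: (ltn_ord j); rewrite -e leqNgt ltnS leq_addr.
Qed.

Lemma keyD (a c' : seq R) n m (en : n = size a) (Zs : 'I_n -> 'M_(n, n + m)) :
  (forall (i k : 'I_n), qf (a ++ c') (row k (Zs i)) = (a`_0)^-1 * a`_k * a`_i) ->
  forall (y : 'rV_n) (i : 'I_n), (a`_0)^-1 * qf a y * a`_i = qf (a ++ c') (y *m Zs i).
Proof.
move=> hZ y i.
rewrite (@qf_mul _ (map (fun x => (a`_0)^-1 * x * a`_i) a)); last first.
  by move=> k; rewrite hZ (@nth_map0 (fun x => (a`_0)^-1 * x * a`_i)) // mulr0 mul0r.
rewrite /qf mulr_sumr mulr_suml; apply: eq_bigr => k _.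
rewrite (@nth_map0 (fun x => (a`_0)^-1 * x * a`_i)) ?mulr0 ?mul0r //.
ring.
Qed.

Lemma D1 (a c' : seq R) n m (en : n = size a) (em : m = size c')
  (Zs : 'I_n -> 'M_(n, n + m)) : anisotropic (a ++ c') ->
  (forall (i k : 'I_n), qf (a ++ c') (row k (Zs i)) = (a`_0)^-1 * a`_k * a`_i) ->
  forall y : 'rV_n, y *m Nmx Zs = 0 -> Sx a ((a`_0)^-1 * qf a y).
Proof.
move=> an hZ y /Nmx0 hy x xa.
have hi : (index x a < n)%N by rewrite en index_mem.
have -> : x = a`_(Ordinal hi) by rewrite /= nth_index.
by rewrite (keyD en hZ) //; apply/(prefix en em) => //; exact: hy.
Qed.

Lemma D2 (a c' : seq R) n m (en : n = size a) (em : m = size c')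
  (Zs : 'I_n -> 'M_(n, n + m)) : anisotropic (a ++ c') -> a`_0 != 0 ->
  (0 < n)%N ->
  (forall (i k : 'I_n), qf (a ++ c') (row k (Zs i)) = (a`_0)^-1 * a`_k * a`_i) ->
  forall c, Sx a c -> exists y : 'rV_n, c = (a`_0)^-1 * qf a y /\ y *m Nmx Zs = 0.
Proof.
move=> an a0 n0 hZ c hc.
have : span a (c * a`_0) by apply: hc; apply: mem_nth; rewrite -en.
move/(@spanE n _ _ en) => [y hy]; exists y.
have ec : c = (a`_0)^-1 * qf a y by rewrite hy [c * _]mulrC mulKf.
split => //; apply/Nmx0 => i; apply/(prefix en em) => //.
rewrite -(keyD en hZ) -ec; apply: hc; apply: mem_nth; rewrite -en; exact: ltn_ord.
Qed.

Lemma K_rows (a c' : seq R) n m (en : n = size a) (em : m = size c')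
  (Zs : 'I_n -> 'M_(n, n + m)) : anisotropic (a ++ c') -> anisotropic a ->
  a`_0 != 0 -> (0 < n)%N ->
  (forall i k : 'I_n, qf (a ++ c') (row k (Zs i)) = (a`_0)^-1 * a`_k * a`_i) ->
  forall cs : seq R, anisotropic cs -> (forall c, c \in cs -> Sx a c) ->
  (size cs <= \rank (kermx (Nmx Zs)))%N.
Proof.
move=> an ana a0 n0 hZ cs ancs hcs.
have /fin_all_exists [g hg] : forall j : 'I_(size cs), exists y : 'rV_n,
    cs`_j = (a`_0)^-1 * qf a y /\ y *m Nmx Zs = 0.
  move=> j; apply: (D2 en em an a0 n0 hZ); apply: hcs; exact: mem_nth.
pose Y := \matrix_(j, k) g j 0 k.
have rY j : row j Y = g j by apply/rowP => k; rewrite !mxE.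
have YN : (Y <= kermx (Nmx Zs))%MS.
  apply/sub_kermxP/row_matrixP => j; by rewrite row_mul rY (proj2 (hg j)) row0.
have fY : row_free Y.
  apply/negPn/negP => /ker_nz [v vnz vY].
  have h : qf a (v *m Y) = (a`_0) * qf cs v.
    rewrite -qf_mapl; apply: qf_mul => j.
    by rewrite (@nth_map0 (fun p => a`_0 * p)) ?mulr0 // rY (proj1 (hg j)) mulVKf.
  move: h; rewrite vY qf0 => /esym /eqP; rewrite mulf_eq0 (negbTE a0) /= => /eqP.
  by move/ancs => v0; move: vnz; rewrite v0 eqxx.
by move/eqnP: fY => <-; apply: mxrankS.
Qed.

Lemma F_rows (a c' : seq R) n m (en : n = size a) (em : m = size c')
  (Zs : 'I_n -> 'M_(n, n + m)) : anisotropic (a ++ c') -> anisotropic a ->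
  a`_0 != 0 ->
  (forall i k : 'I_n, qf (a ++ c') (row k (Zs i)) = (a`_0)^-1 * a`_k * a`_i) ->
  exists e : seq R, [/\ anisotropic e, size e = \rank (kermx (Nmx Zs))
    & forall c, c \in e -> Sx a c].
Proof.
move=> an ana a0 hZ.
set d := \rank (kermx (Nmx Zs)).
pose Y := row_base (kermx (Nmx Zs)).
have YN : Y *m Nmx Zs = 0.
  by apply/sub_kermxP; rewrite /Y eq_row_base submx_refl.
pose e := [seq (a`_0)^-1 * qf a (row j Y) | j <- enum 'I_d].
have se : size e = d by rewrite size_map size_enum_ord.
have ej (j : 'I_d) : e`_j = (a`_0)^-1 * qf a (row j Y).
  by rewrite (nth_map j) ?nth_ord_enum // size_enum_ord.
exists e; split => //.
  apply: (@anisoI d); first by rewrite se.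
  move=> l hl.
  have h : qf a (l *m Y) = a`_0 * qf e l.
    rewrite -qf_mapl; apply: qf_mul => j.
    by rewrite (@nth_map0 (fun p => a`_0 * p)) ?mulr0 // ej mulVKf.
  have : l *m Y = 0 *m Y.
    by rewrite mul0mx; apply: (anisoE en ana); rewrite h hl mulr0.
  by move/(row_free_inj (row_base_free _)).
move=> c /mapP [j _ ->]; apply: (D1 en em an hZ).
by rewrite -row_mul YN row0.
Qed.

Lemma ext (a ws : seq R) : anisotropic a ->
  exists c', anisotropic (a ++ c') /\ forall w, w \in ws -> span (a ++ c') w.
Proof.
elim: ws a => [|w ws IH] a ana; first by exists [::]; rewrite cats0.
case: (classic (span a w)) => [sw|nw].
  have [c' [an hc]] := IH a ana; exists c'; split => // w'.
  rewrite in_cons => /orP [/eqP ->|]; last exact: hc.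
  by apply: span_trans sw => x xa; apply: span_mem; rewrite mem_cat xa.
have an' : anisotropic (a ++ map (fun p => w * p) [:: 1]).
  apply: aniso_step => //; first exact: aniso_pf0.
  by move=> p l [x <-] sl; rewrite /qf big_ord1 /= mul1r; apply: spanZ.
have [c'' [an hc]] := IH _ an'; exists (map (fun p => w * p) [:: 1] ++ c'').
rewrite catA; split => // w'; rewrite in_cons => /orP [/eqP ->|]; last exact: hc.
by apply: span_mem; rewrite mem_cat mem_cat /= mulr1 mem_seq1 eqxx orbT.
Qed.

Lemma tensor_vec (p s' : seq R) s0 N : N = size (qf_tensor p (s0 :: s')) ->
  forall l : 'rV_(size p), exists z : 'rV_N,
    qf (qf_tensor p (s0 :: s')) z = s0 * qf p l /\ (z = 0 -> l = 0).
Proof.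
elim: p N => [|x p IH] N eN l.
  exists 0; rewrite qf0 /qf big_ord0 mulr0; split => // _.
  by apply/rowP => -[].
move: eN; rewrite /qf_tensor allpairs_cons size_cat => eN; subst N.
set l' := \row_(i < size p) l 0 (lift ord0 i).
have [z' [hz' z'0]] := IH _ erefl l'.
exists (row_mx (l 0 ord0 *: delta (ord0 : 'I_(size (map (fun y => x * y) s')).+1)) z').
split.
  rewrite qf_cat row_mxKl row_mxKr qfZ qf_delta /= hz'.
  rewrite /qf big_ord_recl /= mulrDr; congr (_ + _); first by ring.
  by congr (_ * _); apply: eq_bigr => i _; rewrite !mxE.
move=> h0.
have hl : lsubmx (row_mx (l 0 ord0 *: delta (ord0 : 'I_(size (map (fun y => x * y) s')).+1)) z') = 0 by rewrite h0 linear0.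
have hr : rsubmx (row_mx (l 0 ord0 *: delta (ord0 : 'I_(size (map (fun y => x * y) s')).+1)) z') = 0 by rewrite h0 linear0.
rewrite row_mxKl in hl; rewrite row_mxKr in hr.
have l0 : l 0 ord0 = 0.
  by have := congr1 (fun w : 'rV__ => w 0 ord0) hl; rewrite !mxE eqxx mulr1.
have l'0 := z'0 hr.
apply/rowP => i; rewrite mxE; case: (unliftP ord0 i) => [j ->|->] //.
by have := congr1 (fun w : 'rV__ => w 0 j) l'0; rewrite !mxE.
Qed.

Lemma stepA (phi : seq R) r (b : 'I_r -> R) s0 s' :
  anisotropic phi -> qf_iso phi (qf_tensor (quasi_pfister b) (s0 :: s')) ->
  anisotropic (quasi_pfister b) /\
  forall c, c \in quasi_pfister b -> Sx phi c.
Proof.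
set T := qf_tensor _ _ => anphi [eT [A uA hA]].
have anT : anisotropic T.
  apply: (@anisoI (size phi)) => // y hy.
  have : qf phi (y *m invmx A) = 0 by rewrite -hA mulmxKV.
  move/anphi => h; by rewrite -(mulmxKV uA y) h mul0mx.
have Tphi : forall z, z \in T -> span phi z.
  move=> z zT; have hi : (index z T < size phi)%N by rewrite eT index_mem.
  exists (delta (Ordinal hi) *m invmx A); rewrite -hA mulmxKV // qf_delta /=.
  by rewrite nth_index.
have phiT : forall z, z \in phi -> span T z.
  move=> z zp; have hi : (index z phi < size phi)%N by rewrite index_mem.
  apply/(@spanE (size phi)) => //; exists (delta (Ordinal hi) *m A).
  by rewrite hA qf_delta /= nth_index.
split.
  move=> l hl.
  have [z [hz z0]] := @tensor_vec (quasi_pfister b) s' s0 _ erefl l.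
  by apply: z0; apply: anT; rewrite hz hl mulr0.
pose W u := forall v, span T v -> span T (u * v).
have Wb j : W (b j).
  move=> v; apply: span_mulr => x /allpairsP [[u t] [/= up tt ->]].
  have [J eu] := qp_memP up; have [c [J' e']] := qp_mul b j J.
  rewrite mulrA eu e' -mulrA; apply: spanZ; apply: span_mem.
  by apply: allpairs_f => //; exact: qp_mem.
move=> c /qp_memP [J ->] y yp; apply: span_trans; first exact: Tphi.
apply: (big_ind W); [by move=> v; rewrite mul1r | | by move=> j _; exact: Wb |].
  by move=> u1 u2 h1 h2 v sv; rewrite -mulrA; apply: h1; apply: h2.
exact: phiT.
Qed.

End Basics.


Section T.
Variables (F K : fieldType) (iota : {rmorphism F -> K}).

Lemma mmap_uniq n (Phi : {rmorphism {mpoly F[n]} -> K}) (v : 'I_n -> K) :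
  (forall c, Phi c%:MP = iota c) -> (forall i, Phi 'X_i = v i) ->
  forall p, Phi p = mmap iota v p.
Proof.
move=> hC hX p; rewrite {1}(mpolyE p) rmorph_sum /mmap; apply: eq_bigr => m _.
rewrite -mul_mpolyC rmorphM hC mpolyXE_id rmorph_prod /mmap1; congr (_ * _).
by apply: eq_bigr => i _; rewrite rmorphXn hX.
Qed.

Lemma evC n (v : 'I_n -> K) c : mmap iota v c%:MP = iota c.
Proof. exact: mmapC. Qed.

Lemma evX n (v : 'I_n -> K) i : mmap iota v 'X_i = v i.
Proof. by rewrite mmapX mmap1U. Qed.

Lemma evM n (v : 'I_n -> K) p q : mmap iota v (p * q) = mmap iota v p * mmap iota v q.
Proof. exact: rmorphM. Qed.

Lemma evB n (v : 'I_n -> K) p q : mmap iota v (p - q) = mmap iota v p - mmap iota v q.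
Proof. exact: rmorphB. Qed.

Lemma ev1 n (v : 'I_n -> K) : mmap iota v 1 = 1.
Proof. exact: rmorph1. Qed.

Lemma evZ n (v : 'I_n -> K) c p : mmap iota v (c *: p) = iota c * mmap iota v p.
Proof. exact: mmapZ. Qed.

Lemma ev_sum n (v : 'I_n -> K) m (P : 'I_m -> {mpoly F[n]}) :
  mmap iota v (\sum_(i < m) P i) = \sum_(i < m) mmap iota v (P i).
Proof. exact: rmorph_sum. Qed.

Lemma ev_map n (v : 'I_n -> K) p : (map_mpoly iota p).@[v] = mmap iota v p.
Proof.
apply: (@mmap_uniq n (meval v \o map_mpoly iota)) => [c|i] /=.
  by rewrite map_mpolyC mevalC.
by rewrite map_mpolyX mevalXU.
Qed.

Definition ren n k (al : 'I_n -> 'I_k) (p : {mpoly F[n]}) : {mpoly F[k]} :=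
  mmap (@mpolyC k F) (fun i => 'X_(al i)) p.

Lemma ev_ren n k (al : 'I_n -> 'I_k) (v : 'I_k -> K) p :
  mmap iota v (ren al p) = mmap iota (fun i => v (al i)) p.
Proof.
apply: (@mmap_uniq n (mmap iota v \o ren al)) => [c|i] /=.
  by rewrite /ren mmapC evC.
by rewrite /ren mmapX mmap1U evX.
Qed.

Lemma ev_eq n (v w : 'I_n -> K) p : v =1 w -> mmap iota v p = mmap iota w p.
Proof. by move=> h; rewrite /mmap; apply: eq_bigr => m _; rewrite (mmap1_eq _ h). Qed.

Variables (I : Type) (t : I -> K).

Definition tv n (f : 'I_n -> I) : 'I_n -> K := fun i => t (f i).

Definition rep (x : K) := exists n (f : 'I_n -> I) (p q : {mpoly F[n]}),
  mmap iota (tv f) q != 0 /\ x * mmap iota (tv f) q = mmap iota (tv f) p.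

Definition catf n m (f : 'I_n -> I) (g : 'I_m -> I) : 'I_(n + m) -> I :=
  fun k => match split k with inl i => f i | inr j => g j end.

Lemma catf_l n m (f : 'I_n -> I) (g : 'I_m -> I) p :
  mmap iota (tv (catf f g)) (ren (@lshift n m) p) = mmap iota (tv f) p.
Proof.
rewrite ev_ren; apply: ev_eq => i.
by rewrite /tv /catf (unsplitK (inl _ : 'I_n + 'I_m)).
Qed.

Lemma catf_r n m (f : 'I_n -> I) (g : 'I_m -> I) p :
  mmap iota (tv (catf f g)) (ren (@rshift n m) p) = mmap iota (tv g) p.
Proof.
rewrite ev_ren; apply: ev_eq => i.
by rewrite /tv /catf (unsplitK (inr _ : 'I_n + 'I_m)).
Qed.

Lemma ord0_fun (T : Type) : 'I_0 -> T.
Proof. by case. Qed.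

Lemma rep2 x y : rep x -> rep y -> exists n (f : 'I_n -> I) (p q p' q' : {mpoly F[n]}),
  [/\ mmap iota (tv f) q != 0, x * mmap iota (tv f) q = mmap iota (tv f) p,
      mmap iota (tv f) q' != 0 & y * mmap iota (tv f) q' = mmap iota (tv f) p'].
Proof.
move=> [n [f [p [q [hq hx]]]]] [m [g [p' [q' [hq' hy]]]]].
exists (n + m)%N, (catf f g), (ren (@lshift n m) p), (ren (@lshift n m) q),
  (ren (@rshift n m) p'), (ren (@rshift n m) q').
by rewrite !catf_l !catf_r.
Qed.

Lemma repB x y : rep x -> rep y -> rep (x - y).
Proof.
move=> hx hy; have [n [f [p [q [p' [q' [nq ex nq' ey]]]]]]] := rep2 hx hy.
exists n, f, (p * q' - p' * q), (q * q'); split.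
  by rewrite evM mulf_neq0.
by rewrite evB !evM -ex -ey; ring.
Qed.

Lemma repM x y : rep x -> rep y -> rep (x * y).
Proof.
move=> hx hy; have [n [f [p [q [p' [q' [nq ex nq' ey]]]]]]] := rep2 hx hy.
exists n, f, (p * p'), (q * q'); split.
  by rewrite evM mulf_neq0.
by rewrite !evM -ex -ey; ring.
Qed.

Lemma rep_c c : rep (iota c).
Proof.
exists 0%N, (@ord0_fun I), c%:MP, 1; split; first by rewrite ev1 oner_neq0.
by rewrite ev1 mulr1 evC.
Qed.

Lemma repV x : rep x -> rep x^-1.
Proof.
case: (eqVneq x 0) => [-> _|x0]; first by rewrite invr0 -(rmorph0 iota); exact: rep_c.
move=> [n [f [p [q [nq ex]]]]]; exists n, f, q, p.
have np : mmap iota (tv f) p != 0 by rewrite -ex mulf_neq0.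
by split => //; rewrite -ex mulKf.
Qed.

Lemma rep_t i : rep (t i).
Proof.
exists 1%N, (fun _ => i), 'X_ord0, 1; split; first by rewrite ev1 oner_neq0.
by rewrite ev1 mulr1 evX.
Qed.

Lemma rep_fam m (x : 'I_m -> K) : (forall z, rep z) ->
  exists n (f : 'I_n -> I) (Q : {mpoly F[n]}) (Rr : 'I_m -> {mpoly F[n]}),
    mmap iota (tv f) Q != 0 /\ forall i, x i * mmap iota (tv f) Q = mmap iota (tv f) (Rr i).
Proof.
move=> repall; elim: m x => [|m IH] x.
  exists 0%N, (@ord0_fun I), 1, (fun _ => 0); split; first by rewrite ev1 oner_neq0.
  by case.
have [n [f [Q [Rr [nQ hR]]]]] := IH (fun i => x (lift ord0 i)).
have [n' [g [p [q [nq hx]]]]] := repall (x ord0).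
exists (n + n')%N, (catf f g), (ren (@lshift n n') Q * ren (@rshift n n') q).
exists (fun i => if unlift ord0 i is Some j then ren (@lshift n n') (Rr j) * ren (@rshift n n') q
          else ren (@rshift n n') p * ren (@lshift n n') Q).
split; first by rewrite evM catf_l catf_r mulf_neq0.
move=> i; case: unliftP => [j ->|->]; rewrite !evM !catf_l !catf_r.
  by rewrite mulrA hR.
by rewrite -hx; ring.
Qed.

Lemma dedupe n (f : 'I_n -> I) : exists k (h : 'I_k -> I) (al : 'I_n -> 'I_k),
  injective h /\ forall i, f i = h (al i).
Proof.
elim: n f => [|n IH] f.
  by exists 0%N, f, id; split => // [[]].
have [k [h [al [injh hal]]]] := IH (fun i => f (lift ord0 i)).
case: (classic (exists j, h j = f ord0)) => [[j hj]|nj].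
  exists k, h, (fun i => if unlift ord0 i is Some i' then al i' else j); split => // i.
  by case: unliftP => [i' ->|->] //; rewrite -hal.
exists k.+1, (fun j => if unlift ord0 j is Some j' then h j' else f ord0).
exists (fun i => if unlift ord0 i is Some i' then lift ord0 (al i') else ord0); split.
  move=> j1 j2; case: unliftP => [j1' ->|->]; case: unliftP => [j2' ->|->] //.
  - by move/injh => ->.
  - by move=> e; exfalso; apply: nj; exists j1'.
  - by move=> e; exfalso; apply: nj; exists j2'.
move=> i; case: (unliftP ord0 i) => [i' ->|->]; last by rewrite unlift_none.
by rewrite liftK hal.
Qed.

End T.

Lemma sqr_sum_gen (R : comNzRingType) (ch : 2%N \in [pchar R]) (I : Type) (r : seq I)
  (f : I -> R) : (\sum_(i <- r) f i) ^+ 2 = \sum_(i <- r) f i ^+ 2.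
Proof.
apply: (big_morph (fun x => x ^+ 2)) => [x y|]; last by rewrite expr0n.
by rewrite sqrrD -mulr_natr (pcharf0 ch) mulr0 addr0.
Qed.

Lemma coef_sq (F : fieldType) (ch : 2%N \in [pchar F]) k (P : {mpoly F[k]}) mm :
  (P ^+ 2)@_(mm *+ 2) = (P@_mm) ^+ 2.
Proof.
have chM : 2%N \in [pchar {mpoly F[k]}] by exact: (rmorph_pchar (@mpolyC k F) ch).
rewrite {1}(mpolyE P) (sqr_sum_gen chM).
have -> : \sum_(m <- msupp P) (P@_m *: 'X_[m]) ^+ 2 =
          \sum_(m <- msupp P) (P@_m ^+ 2) *: 'X_[m *+ 2].
  by apply: eq_bigr => m _; rewrite exprZn mpolyXn.
rewrite raddf_sum /=.
have e u : ((P@_u ^+ 2) *: 'X_[u *+ 2])@_(mm *+ 2) = (P@_u ^+ 2) * (u == mm)%:R.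
  rewrite mcoeffZ mcoeffX.
  have -> : ((u *+ 2)%MM == (mm *+ 2)%MM) = (u == mm) => //.
  apply/eqP/eqP => [h|->] //; apply/mnmP => i.
  have := congr1 (fun w : 'X_{1..k} => w i) h; rewrite /= !mulmnE !muln2.
  exact: double_inj.
rewrite (eq_bigr _ (fun u _ => e u)).
case: (boolP (mm \in msupp P)) => hm.
  rewrite (bigD1_seq mm) ?msupp_uniq //= eqxx mulr1 big1 ?addr0 // => u /negbTE ->.
  by rewrite mulr0.
rewrite big1_seq; last by move=> u /andP [_ hu]; rewrite (_ : (u == mm) = false) ?mulr0 //; apply: contraNF hm => /eqP <-.
by move: hm; rewrite mcoeff_msupp negbK => /eqP ->; rewrite expr0n.
Qed.

Lemma transfer (F K : fieldType) (iota : {rmorphism F -> K}) :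
  (2%N \in [pchar F]) -> purely_transcendental iota ->
  forall a : seq F, anisotropic a -> anisotropic (map iota a).
Proof.
move=> ch [I [t [indep ind]]] a ana.
have repall : forall z, rep iota t z.
  apply: ind; [exact: rep_c | exact: rep_t | exact: repB | exact: repM | exact: repV].
apply: (@anisoI K (size a)); first by rewrite size_map.
move=> x hx.
have [n [f [Q [Rr [nQ hR]]]]] := rep_fam (fun i : 'I_(size a) => x 0 i) repall.
have [k [h [al [injh hal]]]] := dedupe f.
have evr p : mmap iota (tv t f) p = mmap iota (tv t h) (ren al p).
  by rewrite ev_ren; apply: ev_eq => i; rewrite /tv hal.
pose Rr' i := ren al (Rr i).
pose Pol := \sum_(i < size a) a`_i *: (Rr' i) ^+ 2.
have ePol : mmap iota (tv t h) Pol = 0.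
  rewrite ev_sum.
  have -> : \sum_(i < size a) mmap iota (tv t h) (a`_i *: Rr' i ^+ 2) =
            (mmap iota (tv t f) Q) ^+ 2 * qf (map iota a) x.
    rewrite /qf mulr_sumr; apply: eq_bigr => i _.
    rewrite evZ expr2 evM /Rr' -evr -hR nth_map_rm.
    by rewrite expr2; ring.
  by rewrite hx mulr0.
have Pol0 : Pol = 0.
  apply/eqP/negPn/negP => nz; have := indep k h injh Pol nz.
  by rewrite (ev_map iota (fun i => t (h i))); move: ePol; rewrite /tv => ->; rewrite eqxx.
have R0 i : Rr' i = 0.
  apply/mpolyP => mm; rewrite mcoeff0.
  have : qf a (\row_j (Rr' j)@_mm) = 0.
    have := congr1 (mcoeff (mm *+ 2)) Pol0; rewrite mcoeff0 raddf_sum /= => <-.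
    by rewrite /qf; apply: eq_bigr => j _; rewrite mcoeffZ coef_sq // mxE.
  by move/ana => /rowP /(_ i); rewrite !mxE.
apply/rowP => i; rewrite mxE.
have := hR i; rewrite (evr (Rr i)) -/(Rr' i) R0 (rmorph0 (mmap iota (tv t h))).
by move/eqP; rewrite mulf_eq0 (negbTE nQ) orbF => /eqP.
Qed.

Theorem lemma5p1 (F K : fieldType) (iota : {rmorphism F -> K})
  (phi : seq F) (r : nat) :
  (2%N \in [pchar F]) ->
  anisotropic phi ->
  purely_transcendental iota ->
  (0 < r)%N ->
  divisible_by_rfold_qpfister (map iota phi) r ->
  divisible_by_rfold_qpfister phi r.
Proof.
move=> ch anphi pt r0 [b [sigma hiso]].
have chK : 2%N \in [pchar K] by exact: rmorph_pchar ch.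
have triv : phi = [::] -> divisible_by_rfold_qpfister phi r.
  move=> ->; exists (fun _ => 0), [::]; rewrite /qf_tensor allpairs0r.
  by apply: iso_of_span => //; exact: aniso_nil.
case: (posnP (size phi)) => [/size0nil|n0]; first exact: triv.
case: sigma hiso => [|s0 s'] hiso.
  by move: hiso => [+ _]; rewrite /qf_tensor allpairs0r size_map => /size0nil /triv.
set a := phi in anphi n0 hiso *.
have a0 : a`_0 != 0 by apply: (aniso_nz anphi); exact: mem_nth.
set ws := [seq (a`_0)^-1 * x * y | x <- a, y <- a].
have [c' [anB hws]] := ext ch ws anphi.
have /fin_all_exists [Zs hZs] : forall i : 'I_(size a),
    exists Z : 'M_(size a, size a + size c'),
      forall k, qf (a ++ c') (row k Z) = (a`_0)^-1 * a`_k * a`_i.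
  move=> i; apply: coord_mx; first by rewrite size_cat.
  move=> k; apply: hws; apply: allpairs_f; exact: mem_nth.
have [e [ane se he]] := F_rows ch erefl erefl anB anphi a0 hZs.
apply: (stepC ch anphi ane _ he); rewrite se.
have [ancs hcs] := stepA chK (transfer ch pt anphi) hiso.
set aK := map iota a; set cK := map iota c'.
have anBK : anisotropic (aK ++ cK) by rewrite -map_cat; exact: transfer.
have a0K : aK`_0 != 0 by rewrite nth_map_rm // fmorph_eq0.
have hZK : forall i k : 'I_(size a),
    qf (aK ++ cK) (row k (map_mx iota (Zs i))) = (aK`_0)^-1 * aK`_k * aK`_i.
  by move=> i k; rewrite -map_cat -map_row qf_map hZs !nth_map_rm rmorphM rmorphM fmorphV.
have := K_rows chK (esym (size_map _ _)) (esym (size_map _ _)) anBK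
  (transfer ch pt anphi) a0K n0 hZK ancs hcs.
by rewrite size_qp -map_Nmx -map_kermx mxrank_map.
Qed.
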